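(* Let $\mathcal{S}$ be a finite elation generalized quadrangle of order $(s,t)$ with elation group $G$ and associated $4$-gonal family $(G,\{A_i\}_{i=0}^t,\{A_i^*\}_{i=0}^t)$. If $s$ does not divide $t$, then $A_i^*G'=A_iG'$ for each $i\in\{0,\dots,t\}$.
   Context: A generalized quadrangle of order $(s,t)$: each line has $s+1$ points, each point is on $t+1$ lines, and for each non-incident point-line pair $(P,\ell)$ there is a unique point on $\ell$ collinear with $P$. An elation about $P$ is an automorphism that is the identity or fixes each line through $P$ and no point not collinear with $P$. $\mathcal{S}$ is an elation generalized quadrangle with base point $P$ and elation group $G$ if $G$ consists of elations about $P$ and acts regularly on the points not collinear with $P$. The associated $4$-gonal family: fix a point $y$ not collinear with $P$, let $M_0,\dots,M_t$ be the lines through $y$, let $z_i$ be the unique point of $M_i$ collinear with $P$, and let $A_i$, $A_i^*$ be the stabilizers in $G$ of $M_i$ and $z_i$ respectively. $G'$ is the derived subgroup of $G$. *)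

(* Defs.v *)
From mathcomp Require Import all_boot all_fingroup.
Set Implicit Arguments. Unset Strict Implicit. Unset Printing Implicit Defensive.
Import GroupScope.

Section GQ.
Variables (Point Line : finType) (inc : Point -> Line -> bool).

(* x and y lie on a common line (every point is collinear with itself) *)
Definition collinear (x y : Point) : bool := [exists L, inc x L && inc y L].

Definition is_GQ (s t : nat) : Prop :=
  [/\ forall L : Line, #|[set x | inc x L]| = s.+1,
      forall x : Point, #|[set L | inc x L]| = t.+1,
      forall (x y : Point) (L M : Line),
        x != y -> inc x L -> inc y L -> inc x M -> inc y M -> L = M
    & forall (x : Point) (L : Line), ~~ inc x L ->
        exists! z : Point, inc z L /\ collinear x z].

Definition autT := ({perm Point} * {perm Line})%type.

Definition is_aut (g : autT) : Prop :=
  forall (x : Point) (L : Line), inc (g.1 x) (g.2 L) = inc x L.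

Definition is_elation (P : Point) (g : autT) : Prop :=
  is_aut g /\
  (g = 1 \/ ((forall L, inc P L -> g.2 L = L) /\
             (forall x, ~~ collinear P x -> g.1 x != x))).

Definition is_elation_group (P : Point) (G : {group autT}) : Prop :=
  (forall g, g \in G -> is_elation P g) /\
  (forall x y : Point, ~~ collinear P x -> ~~ collinear P y ->
     exists! g : autT, g \in G /\ g.1 x = y).

Definition stab_pt (G : {group autT}) (z : Point) : {set autT} :=
  [set g in G | g.1 z == z].
Definition stab_line (G : {group autT}) (M : Line) : {set autT} :=
  [set g in G | g.2 M == M].

End GQ.

(* Main.v *)
Require Import Defs.
From mathcomp Require Import all_boot all_fingroup all_algebra all_field all_solvable all_character.
Set Implicit Arguments. Unset Strict Implicit. Unset Printing Implicit Defensive.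
Import GroupScope GRing.Theory Num.Theory.

Section Geo.
Variables (Point Line : finType) (inc : Point -> Line -> bool) (s t : nat)
  (P : Point) (G : {group autT Point Line}).
Hypotheses (t_gt0 : (0 < t)%N) (HGQ : is_GQ inc s t)
  (HE : is_elation_group inc P G).

Local Notation col := (collinear inc).

Lemma line_uniq x w L N : x != w -> inc x L -> inc w L -> inc x N -> inc w N -> L = N.
Proof. by case: HGQ => _ _ H _; apply: H. Qed.

Lemma col_on x w L : inc x L -> inc w L -> col x w.
Proof. by move=> h1 h2; apply/existsP; exists L; rewrite h1 h2. Qed.

Lemma colP x w : col x w -> exists L, inc x L /\ inc w L.
Proof. by case/existsP=> L /andP[h1 h2]; exists L. Qed.

Lemma colC x w : col x w = col w x.
Proof. by apply/idP/idP=> /colP[L [h1 h2]]; apply: (@col_on _ _ L). Qed.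

Lemma pt_uniq x L a b : ~~ inc x L -> inc a L -> col x a -> inc b L -> col x b -> a = b.
Proof.
case: HGQ => _ _ _ H nxL aL xa bL xb.
have [c [_ Hc]] := H x L nxL.
by rewrite -(Hc a) ?(Hc b).
Qed.

Lemma pt_ex x L : ~~ inc x L -> exists a, inc a L /\ col x a.
Proof. case: HGQ => _ _ _ H nxL. by have [c [Hc _]] := H x L nxL; exists c. Qed.

Lemma aut_inc g x L : g \in G -> inc (g.1 x) (g.2 L) = inc x L.
Proof. by case: HE => H _ gG; case: (H g gG) => Ha _; apply: Ha. Qed.

Lemma aut_col g x w : g \in G -> col (g.1 x) (g.1 w) = col x w.
Proof.
move=> gG; apply/idP/idP => /colP[L [h1 h2]].
  apply: (@col_on _ _ ((g.2)^-1 L)); by rewrite -(aut_inc _ _ gG) permKV.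
by apply: (@col_on _ _ (g.2 L)); rewrite aut_inc.
Qed.

Lemma fixL g L : g \in G -> inc P L -> g.2 L = L.
Proof.
case: HE => H _ gG PL; case: (H g gG) => _ [-> | [H1 _]]; first by rewrite perm1.
exact: H1.
Qed.

Lemma fixP g : g \in G -> g.1 P = P.
Proof.
move=> gG; case: HGQ => _ Hc _ _.
have : (1 < #|[set L | inc P L]|)%N by rewrite Hc ltnS.
case/card_gt1P => L1 [L2 []]; rewrite !inE => h1 h2 n12.
apply/eqP; apply: contraR n12 => ne; apply/eqP.
apply: (line_uniq ne) => //.
- by rewrite -{1}(fixL gG h1) aut_inc.
- by rewrite -{1}(fixL gG h2) aut_inc.
Qed.

Lemma colP_inv g x : g \in G -> col P (g.1 x) = col P x.
Proof. by move=> gG; rewrite -{1}(fixP gG) aut_col. Qed.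

Lemma reg x g h : ~~ col P x -> g \in G -> h \in G -> g.1 x = h.1 x -> g = h.
Proof.
case: HE => _ H nx gG hG e.
have nx' : ~~ col P (g.1 x) by rewrite colP_inv.
have [g' [_ U]] := H x (g.1 x) nx nx'.
by rewrite -(U g) // -(U h).
Qed.

Lemma reg_ex x w : ~~ col P x -> ~~ col P w -> exists g, g \in G /\ g.1 x = w.
Proof. case: HE => _ H nx nw; have [g [Hg _]] := H x w nx nw; by exists g. Qed.

Lemma reg1 x g : ~~ col P x -> g \in G -> g.1 x = x -> g = 1.
Proof. by move=> nx gG e; apply: (reg nx gG (group1 G)); rewrite e perm1. Qed.

Variables (y : Point) (M : Line) (z : Point).
Hypotheses (ny : ~~ col P y) (yM : inc y M) (zM : inc z M) (cz : col P z).

Lemma P_notin N : inc y N -> ~~ inc P N.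
Proof. by move=> yN; apply: contra ny => PN; apply: col_on PN yN. Qed.

Lemma K1 g N : g \in G -> inc y N -> inc (g.1 y) N -> g.2 N = N.
Proof.
move=> gG yN gyN.
have [zN [zNN czN]] := pt_ex (P_notin yN).
have [L [PL zNL]] := colP czN.
have nw : ~~ col P (g.1 y) by rewrite colP_inv.
have wL : ~~ inc (g.1 y) L by apply: contra nw => wL; apply: col_on PL wL.
have gzL : inc (g.1 zN) L by rewrite -(fixL gG PL) aut_inc.
have e : g.1 zN = zN.
  apply: (pt_uniq wL gzL _ zNL); last by apply: col_on gyN zNN.
  by apply: (@col_on _ _ (g.2 N)); rewrite aut_inc.
have ne : g.1 y != zN by apply: contraNneq nw => ->.
symmetry; apply: (line_uniq ne gyN zNN); first by rewrite aut_inc.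
by rewrite -e aut_inc.
Qed.

Lemma K1' g : g \in G -> g.2 M = M -> g.1 z = z.
Proof.
move=> gG e; apply: (pt_uniq (P_notin yM) _ _ zM cz).
  by have := aut_inc z M gG; rewrite e => ->.
by rewrite colP_inv.
Qed.

Lemma K2 g : g \in G -> (g.1 z == z) = col (g.1 y) z.
Proof.
move=> gG; apply/eqP/idP => [e | c].
  by rewrite -[X in col _ X]e aut_col //; apply: col_on yM zM.
have [L [PL zL]] := colP cz.
have nw : ~~ col P (g.1 y) by rewrite colP_inv.
have wL : ~~ inc (g.1 y) L by apply: contra nw => wL; apply: col_on PL wL.
apply: (pt_uniq wL _ _ zL c); first by rewrite -(fixL gG PL) aut_inc.
by rewrite aut_col //; apply: col_on yM zM.
Qed.


Lemma mul1E (a b : autT Point Line) : (a * b).1 = a.1 * b.1. Proof. by []. Qed.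
Lemma mul2E (a b : autT Point Line) : (a * b).2 = a.2 * b.2. Proof. by []. Qed.
Lemma inv1E (a : autT Point Line) : (a^-1).1 = (a.1)^-1. Proof. by []. Qed.
Lemma one1E : (1 : autT Point Line).1 = 1. Proof. by []. Qed.
Lemma one2E : (1 : autT Point Line).2 = 1. Proof. by []. Qed.

Lemma stab_line_group N : group_set (stab_line G N).
Proof.
apply/group_setP; split; first by rewrite inE group1 one2E perm1 eqxx.
move=> a b; rewrite !inE => /andP[aG /eqP ea] /andP[bG /eqP eb].
by rewrite groupM // mul2E permM ea eb eqxx.
Qed.

Lemma stab_pt_group x : group_set (stab_pt G x).
Proof.
apply/group_setP; split; first by rewrite inE group1 one1E perm1 eqxx.
move=> a b; rewrite !inE => /andP[aG /eqP ea] /andP[bG /eqP eb].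
by rewrite groupM // mul1E permM ea eb eqxx.
Qed.

Definition Fset N := if inc y N && (N != M) then stab_line G N :\ 1 else set0.
Definition Bset := \bigcup_N Fset N.

Lemma memB b : (b \in Bset) = [&& b \in G, b != 1, col y (b.1 y) & ~~ inc (b.1 y) M].
Proof.
apply/bigcupP/idP => [[N _] | ].
  rewrite /Fset; case: ifP => [/andP[yN nNM] | ]; last by rewrite inE.
  rewrite !inE => /andP[b1 /andP[bG /eqP e]].
  have bN : inc (b.1 y) N by rewrite -e aut_inc.
  rewrite bG b1 (col_on yN bN) /=.
  apply: contra nNM => bM; apply/eqP; symmetry.
  have ne : b.1 y != y by apply: contra b1 => /eqP h; apply/eqP; apply: reg1 h.
  exact: (line_uniq ne).
case/and4P => bG b1 cb nbM.
have [N [yN bN]] := colP cb.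
exists N => //; rewrite /Fset yN /=.
have -> : N != M by apply: contraNneq nbM => <-.
by rewrite !inE b1 bG (K1 bG yN bN) eqxx.
Qed.

Lemma Fdisj N N' : N != N' -> [disjoint Fset N & Fset N'].
Proof.
move=> nNN; rewrite disjoint_subset; apply/subsetP => b hb; rewrite inE /=.
apply/negP => hb'; move: hb hb'; rewrite /Fset.
case: ifP => [/andP[yN _] | ]; last by rewrite inE.
case: ifP => [/andP[yN' _] | _ _]; last by rewrite in_set0.
rewrite !inE => /andP[b1 /andP[bG /eqP e]] /andP[_ /andP[_ /eqP e']].
have bN : inc (b.1 y) N by rewrite -e aut_inc.
have bN' : inc (b.1 y) N' by rewrite -e' aut_inc.
have ne : b.1 y != y by apply: contra b1 => /eqP h; apply/eqP; apply: reg1 h.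
by move/eqP: nNN; apply; apply: (line_uniq ne).
Qed.

Lemma decomp : G :\: stab_pt G z = [set p.1 * p.2 | p in setX Bset (stab_line G M)].
Proof.
apply/setP => g; apply/idP/imsetP.
  rewrite in_setD inE => /andP[h gG]; rewrite gG /= K2 // in h.
  have wM : ~~ inc (g.1 y) M by apply: contra h => wM; apply: col_on wM zM.
  have [x [xM cwx]] := pt_ex wM.
  have nx : ~~ col P x.
    apply: contra h => cx.
    by rewrite -(pt_uniq (P_notin yM) xM cx zM cz).
  have [a [aG ay]] := reg_ex ny nx.
  have aM : a.2 M = M by apply: K1 => //; rewrite ay.
  exists (g * a^-1, a); last by rewrite /= mulgKV.
  rewrite inE /= memB !inE aG aM eqxx andbT groupM ?groupV //=.
  rewrite permM andbT.
  have ->: col y ((a.1)^-1 (g.1 y)) by rewrite -(aut_col _ _ aG) permKV ay colC.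
  have -> : ~~ inc ((a.1)^-1 (g.1 y)) M by rewrite -(aut_inc _ M aG) permKV aM.
  rewrite ?andbT; apply: contra wM => /eqP b1.
  have -> : g = a by rewrite -(mulgKV a g) b1 mul1g.
  by rewrite ay.
case => [[b a]]; rewrite inE /= memB => /andP[/and4P[bG b1 cb nbM]].
rewrite inE => /andP[aG /eqP aM] ->.
rewrite in_setD inE groupM // andbT K2 ?groupM //= permM.
rewrite -[X in col _ X](K1' aG aM) aut_col //.
apply/negP => cbz.
have yz : y = z.
  apply: (pt_uniq nbM yM _ zM cbz); by rewrite colC.
by move: ny; rewrite yz cz.
Qed.

Lemma decomp_inj : {in setX Bset (stab_line G M) &, injective (fun p => p.1 * p.2)}.
Proof.
move=> [b a] [b' a']; rewrite !inE /= !memB.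
move=> /andP[/and4P[bG b1 cb nbM] /andP[aG /eqP aM]].
move=> /andP[/and4P[b'G b'1 cb' nb'M] /andP[a'G /eqP a'M]] e.
have wy : a.1 (b.1 y) = a'.1 (b'.1 y) by rewrite -!permM -!mul1E e.
have wM : ~~ inc (a.1 (b.1 y)) M by rewrite -[X in inc _ X]aM aut_inc.
have aa : a = a'.
  apply: (reg ny aG a'G); apply: (pt_uniq wM).
  - by rewrite -aM aut_inc.
  - by rewrite aut_col // colC.
  - by rewrite -a'M aut_inc.
  - by rewrite wy aut_col // colC.
by move: e; rewrite aa => /mulIg ->.
Qed.

Lemma card_AN N : inc y N -> #|stab_line G N| = s.
Proof.
move=> yN; have [zN [zNN czN]] := pt_ex (P_notin yN).
pose f := fun g : autT Point Line => g.1 y.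
have inj : {in stab_line G N &, injective f}.
  move=> g h; rewrite !inE => /andP[gG _] /andP[hG _]; exact: reg.
rewrite -(card_in_imset inj).
have -> : f @: stab_line G N = [set x | inc x N] :\ zN.
  apply/setP => x; rewrite !inE; apply/imsetP/andP.
    case=> g; rewrite inE => /andP[gG /eqP e] ->; rewrite /f; split.
      by apply: contraNneq ny => h; rewrite -(colP_inv y gG) h.
    by rewrite -e aut_inc.
  case=> xz xN.
  have nx : ~~ col P x.
    by apply: contra xz => cx; rewrite (pt_uniq (P_notin yN) xN cx zNN czN).
  have [g [gG gy]] := reg_ex ny nx.
  exists g => //; rewrite inE gG K1 // ?eqxx // gy //.
case: HGQ => HL _ _ _.
have := HL N; rewrite (cardsD1 zN) inE zNN /= add1n => -[] //.
Qed.

Lemma card_lines : #|[set N | inc y N & N != M]| = t.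
Proof.
case: HGQ => _ Hc _ _.
have -> : [set N | inc y N & N != M] = [set N | inc y N] :\ M.
  by apply/setP => N; rewrite !inE andbC.
have := Hc y; rewrite (cardsD1 M) inE yM /= add1n => -[] //.
Qed.

End Geo.

Section Sums.
Local Open Scope ring_scope.
Variables (gT : finGroupType) (G : {group gT}) (f : gT -> algC).
Hypothesis fM : {in G &, forall a b, f (a * b)%g = f a * f b}.

Lemma sum_triv (K : {set gT}) : {in K, forall k, f k = 1} -> \sum_(k in K) f k = #|K|%:R.
Proof. by move=> h; rewrite (eq_bigr (fun _ => 1)) ?sumr_const // => k /h. Qed.

Lemma sum_nontriv (K : {group gT}) k : K \subset G -> k \in K -> f k != 1 ->
  \sum_(x in K) f x = 0.
Proof.
move=> sKG kK fk.
have e : \sum_(x in K) f x = f k * \sum_(x in K) f x.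
  rewrite mulr_sumr (reindex_inj (mulgI k)) /=.
  rewrite (eq_bigl (fun x => x \in K)) => [|x]; last by rewrite groupMl.
  by apply: eq_bigr => x xK; rewrite fM // (subsetP sKG).
move: e; rewrite -{1}[\sum_(x in K) f x]mul1r => /eqP.
rewrite -subr_eq0 -mulrBl mulf_eq0 subr_eq0 eq_sym (negbTE fk) /=.
by move/eqP.
Qed.
End Sums.

Section Sep.
Local Open Scope ring_scope.
Lemma sep_char (gT : finGroupType) (G H : {group gT}) x :
  (H <| G)%g -> (G^`(1))%g \subset H -> x \in G -> x \notin H ->
  exists f : gT -> algC,
    [/\ {in G &, forall a b, f (a * b)%g = (f a * f b)%R},
        {in H, forall h, f h = 1%R} & f x != 1%R].
Proof.
move=> nsHG sDH xG xH.
have capE := cap_cfker_normal nsHG.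
have [i Hi xi] : exists2 i : Iirr G, H \subset cfker 'chi[G]_i & x \notin cfker 'chi_i.
  case: (boolP [exists i : Iirr G, (H \subset cfker 'chi[G]_i) && (x \notin cfker 'chi_i)]).
    by case/existsP => i /andP[]; exists i.
  move/existsPn => h; case/negP: xH; rewrite -capE; apply/bigcapP => i Hi.
  by move: (h i); rewrite Hi /= negbK.
have lin : 'chi[G]_i \is a linear_char by rewrite lin_irr_der1 (subset_trans sDH).
exists (fun g => 'chi[G]_i g); split.
- exact: lin_charM.
- move=> h hH; have := subsetP Hi h hH; rewrite cfkerEirr inE => /eqP ->.
  exact: lin_char1.
- by move: xi; rewrite cfkerEirr inE lin_char1.
Qed.
End Sep.

Section Main.
Local Open Scope ring_scope.
Lemma key (Point Line : finType) (inc : Point -> Line -> bool)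
  (s t : nat) (P : Point) (G : {group autT Point Line}) :
  (0 < t)%N -> is_GQ inc s t -> is_elation_group inc P G -> ~~ (s %| t)%N ->
  forall (y : Point) (M : Line) (z : Point),
    ~~ collinear inc P y -> inc y M -> inc z M -> collinear inc P z ->
  forall f : autT Point Line -> algC,
    {in G &, forall a b, f (a * b)%g = f a * f b} ->
    {in stab_line G M, forall h, f h = 1} ->
    forall x, x \in stab_pt G z -> f x != 1 -> False.
Proof.
move=> t_gt0 HGQ HE nst y M z ny yM zM cz f fM fA x xAs fx.
pose AG := Group (stab_line_group G M).
pose AsG := Group (stab_pt_group G z).
have sAsG : stab_pt G z \subset G by apply/subsetP => g; rewrite inE => /andP[].
have sAG : stab_line G M \subset G by apply/subsetP => g; rewrite inE => /andP[].
have f1 : f 1%g = 1 by apply: fA; apply: (group1 AG).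
have SG : \sum_(g in G) f g = 0 by apply: (sum_nontriv fM (subxx G) (subsetP sAsG x xAs) fx).
have SAs : \sum_(g in stab_pt G z) f g = 0 by apply: (sum_nontriv fM (K := AsG) sAsG xAs fx).
have SD : \sum_(g in G :\: stab_pt G z) f g = 0.
  by move: SG; rewrite (big_setID (stab_pt G z)) (setIidPr sAsG) /= SAs add0r.
pose B := Bset inc G y M.
have SB : \sum_(b in B) f b = 0.
  move: SD; rewrite (decomp t_gt0 HGQ HE ny yM zM cz) (big_imset _ (decomp_inj t_gt0 HGQ HE ny yM)).
  rewrite /= (eq_bigl (fun p => (p.1 \in B) && (p.2 \in stab_line G M))); last first.
    by case=> ??; rewrite in_setX.
  rewrite -(pair_big_dep (fun b => b \in B) (fun _ a => a \in stab_line G M) (fun b a => f (b * a)%g)) /=.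
  have -> : \sum_(b in B) \sum_(a in stab_line G M) f (b * a)%g =
            \sum_(b in B) f b * #|stab_line G M|%:R.
    apply: eq_bigr => b bB.
    have bG : b \in G by move: bB; rewrite (memB t_gt0 HGQ HE ny yM) => /andP[].
    rewrite -(sum_triv fA) mulr_sumr; apply: eq_bigr => a aA.
    by rewrite fM // (subsetP sAG).
  have cA : (#|stab_line G M| == 0)%N = false by apply: negbTE; rewrite -lt0n (cardG_gt0 AG).
  rewrite -mulr_suml => /eqP; rewrite mulf_eq0 pnatr_eq0 cA orbF.
  by move/eqP.
pose L := [set N | inc y N & N != M].
pose c N := if [forall a in stab_line G N, f a == 1] then s else 0%N.
have SN : forall N, N \in L -> \sum_(b in Fset inc G y M N) f b = (c N)%:R - 1.
  move=> N; rewrite inE => /andP[yN nNM].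
  rewrite /Fset yN nNM /=.
  have oN : (1%g : autT Point Line) \in stab_line G N by apply: (group1 (Group (stab_line_group G N))).
  have -> : \sum_(b in stab_line G N :\ 1%g) f b = \sum_(b in stab_line G N) f b - 1.
    by rewrite (big_setD1 _ oN) /= f1 [1 + _]addrC addrK.
  congr (_ - _); rewrite /c.
  case: forallP => [h | /forallP].
    rewrite (sum_triv (f:=f)) ?(card_AN t_gt0 HGQ HE ny yN) // => a aA.
    by move: (h a); rewrite aA => /eqP.
  rewrite negb_forall => /existsP[a]; rewrite negb_imply => /andP[aA fa].
  rewrite (sum_nontriv fM (K := Group (stab_line_group G N)) _ aA fa) //.
  by apply/subsetP => g; rewrite inE => /andP[].
have SB' : \sum_(b in B) f b = \sum_(N in L) ((c N)%:R - 1).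
  rewrite /B /Bset (partition_disjoint_bigcup _ f (Fdisj t_gt0 HGQ HE M ny)).
  rewrite [RHS]big_mkcond; apply: eq_bigr => N _.
  case: ifP => NL; first by rewrite SN.
  rewrite /Fset; move: NL; rewrite inE => ->; by rewrite big_set0.
move: SB; rewrite SB' sumrB sumr_const (card_lines HGQ yM) => /eqP.
rewrite subr_eq0 -natr_sum eqr_nat => /eqP ht.
case/negP: nst; rewrite -ht; apply: dvdn_sum => N _.
by rewrite /c; case: ifP.
Qed.
End Main.

Theorem corollary2p5 (Point Line : finType) (inc : Point -> Line -> bool)
  (s t : nat) (P : Point) (G : {group autT Point Line}) :
  (0 < s)%N -> (0 < t)%N ->
  is_GQ inc s t ->
  is_elation_group inc P G ->
  ~~ (s %| t)%N ->
  forall (y : Point) (M : Line) (z : Point),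
    ~~ collinear inc P y -> inc y M -> inc z M -> collinear inc P z ->
    stab_pt G z * [~: G, G] = stab_line G M * [~: G, G].
Proof.
move=> s_gt0 t_gt0 HGQ HE nst y M z ny yM zM cz.
pose AG := Group (stab_line_group G M).
have sAG : stab_line G M \subset G by apply/subsetP => g; rewrite inE => /andP[].
have sAsG : stab_pt G z \subset G by apply/subsetP => g; rewrite inE => /andP[].
have sAAs : stab_line G M \subset stab_pt G z.
  apply/subsetP => g; rewrite !inE => /andP[gG /eqP e].
  by rewrite gG (K1' t_gt0 HGQ HE ny yM zM cz gG e) eqxx.
have nDA : AG \subset 'N([~: G, G]).
  apply: subset_trans sAG _; exact: (normal_norm (der_normal 1 G)).
pose H := (AG <*> [~: G, G])%G.
have HE' : H :=: stab_line G M * [~: G, G] by exact: norm_joinEl nDA.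
have sDH : [~: G, G] \subset H by apply: joing_subr.
have sHG : H \subset G by rewrite join_subG sAG; exact: (der_sub 1 G).
have nsHG : H <| G by apply: sub_der1_normal.
suff sAsH : stab_pt G z \subset stab_line G M * [~: G, G].
  apply/eqP; rewrite eqEsubset; apply/andP; split; last exact: mulSg.
  apply: subset_trans (mulSg _ sAsH) _.
  by rewrite -mulgA mulGid subxx.
rewrite -HE'; apply/subsetP => x xAs; apply/negPn/negP => xH.
have [f [fM fH fx]] := sep_char nsHG sDH (subsetP sAsG x xAs) xH.
apply: (key t_gt0 HGQ HE nst ny yM zM cz fM _ xAs fx).
by move=> h hA; apply: fH; rewrite HE' -[h]mulg1 mem_mulg ?group1.
Qed.
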